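(* Assume that a Luzin set exists. Then there exists a set $A\subseteq\mathbb{R}^2$ such that for every straight line $l\subseteq\mathbb{R}^2$, the set $A\cap l$ is a strong Luzin set in $l$, i.e. for an isometry $T:\mathbb{R}\to l$ onto $l$, the set $T^{-1}(A\cap l)$ is a strong Luzin subset of $\mathbb{R}$.
   Context: A Luzin set is a set $L\subseteq\mathbb{R}$ with $|L|=\mathfrak{c}$ such that $L\cap M$ is countable for every meager $M\subseteq\mathbb{R}$; it is a strong Luzin set if moreover $L\cap B$ is uncountable for every non-meager Borel set $B\subseteq\mathbb{R}$. *)

(* Defs.v *)
From Stdlib Require Import Reals Rtopology.
Open Scope R_scope.

Definition countable (S : R -> Prop) : Prop :=
  exists g : nat -> R, forall x, S x -> exists n, g n = x.

Definition card_continuum (L : R -> Prop) : Prop :=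
  exists f : R -> R,
    (forall x y, f x = f y -> x = y) /\
    (forall x, L (f x)) /\ (forall y, L y -> exists x, f x = y).

Definition nowhere_dense (N : R -> Prop) : Prop :=
  forall x, ~ interior (adherence N) x.

Definition meager (M : R -> Prop) : Prop :=
  exists Nn : nat -> (R -> Prop),
    (forall n, nowhere_dense (Nn n)) /\
    (forall x, M x -> exists n, Nn n x).

Inductive borel : (R -> Prop) -> Prop :=
  | borel_open : forall U, open_set U -> borel U
  | borel_compl : forall B, borel B -> borel (fun x => ~ B x)
  | borel_cunion : forall Bn : nat -> (R -> Prop),
      (forall n, borel (Bn n)) -> borel (fun x => exists n, Bn n x)
  | borel_ext : forall B C, borel B -> (forall x, B x <-> C x) -> borel C.

Definition luzin (L : R -> Prop) : Prop :=
  card_continuum L /\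
  forall M, meager M -> countable (fun x => L x /\ M x).

Definition strong_luzin (L : R -> Prop) : Prop :=
  luzin L /\
  forall B, borel B -> ~ meager B -> ~ countable (fun x => L x /\ B x).

Definition dist2 (p q : R * R) : R :=
  sqrt ((fst p - fst q) ^ 2 + (snd p - snd q) ^ 2).

(* Isometric embeddings R -> R^2; their images are exactly the straight lines,
   and every isometry of R onto a line is of this kind. *)
Definition isometry_R_R2 (T : R -> R * R) : Prop :=
  forall s t, dist2 (T s) (T t) = Rabs (s - t).

(* Main.v *)
Require Import Defs.
From Stdlib Require Import Reals.
Open Scope R_scope.
From Stdlib Require Import Reals Rtopology Lra Lia Classical ClassicalEpsilon IndefiniteDescription Cantor FunctionalExtensionality.
Open Scope R_scope.

Lemma C_sub (A B : R -> Prop) : countable B -> (forall x, A x -> B x) -> countable A.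
Proof. intros [g Hg] H. exists g. intros x Ax. apply Hg, H, Ax. Qed.

Lemma C_empty : countable (fun _ => False).
Proof. exists (fun _ => 0). intros x []. Qed.

Lemma C_bigunion (F : nat -> R -> Prop) :
  (forall n, countable (F n)) -> countable (fun x => exists n, F n x).
Proof.
  intros H. apply functional_choice in H. destruct H as [G HG].
  exists (fun k => G (fst (of_nat k)) (snd (of_nat k))).
  intros x [n Hn]. destruct (HG n x Hn) as [m Hm].
  exists (to_nat (n, m)). rewrite cancel_of_to. simpl. exact Hm.
Qed.

Lemma C_union2 (A B : R -> Prop) : countable A -> countable B ->
  countable (fun x => A x \/ B x).
Proof.
  intros HA HB. apply C_sub with (B := fun x : R => exists n : nat, (match n with O => A | _ => B end) x).
  - apply C_bigunion. intros [|n]; assumption.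
  - intros x [H|H]; [exists 0%nat | exists 1%nat]; exact H.
Qed.

Lemma C_image (A : R -> Prop) (f : R -> R) : countable A ->
  countable (fun y => exists x, A x /\ f x = y).
Proof. intros [g Hg]. exists (fun n => f (g n)). intros y [x [Ax <-]].
  destruct (Hg x Ax) as [n <-]. exists n; reflexivity. Qed.

Lemma C_preimage (A : R -> Prop) (f : R -> R) :
  countable (fun y => exists x, A x /\ f x = y) ->
  (forall x y, A x -> A y -> f x = f y -> x = y) -> countable A.
Proof.
  intros [h Hh] Hinj.
  exists (fun n => epsilon (inhabits 0) (fun x => A x /\ f x = h n)).
  intros x Ax. destruct (Hh (f x) (ex_intro _ x (conj Ax eq_refl))) as [n Hn].
  exists n. pose proof (epsilon_spec (inhabits 0) (fun x => A x /\ f x = h n)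
    (ex_intro _ x (conj Ax (eq_sym Hn)))) as [H1 H2].
  apply Hinj; auto. congruence.
Qed.

Section Unc.
Variable h : nat -> R.
Definition stepI (k : nat) (p : R * R) : R * R :=
  let (a, b) := p in
  if Rle_dec (h k) ((a + b) / 2) then ((a + 2 * b) / 3, b) else (a, (2 * a + b) / 3).
Fixpoint iv (n : nat) : R * R :=
  match n with O => (0, 1) | S k => stepI k (iv k) end.

Lemma iv_lt n : fst (iv n) < snd (iv n).
Proof. induction n; simpl. lra. destruct (iv n) as [a b]; unfold stepI; simpl in *.
  destruct Rle_dec; simpl; lra. Qed.

Lemma iv_mono n : fst (iv n) <= fst (iv (S n)) /\ snd (iv (S n)) <= snd (iv n).
Proof. pose proof (iv_lt n). simpl. destruct (iv n) as [a b]; unfold stepI; simpl in *.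
  destruct Rle_dec; simpl; lra. Qed.

Lemma iv_mono2 n m : (n <= m)%nat -> fst (iv n) <= fst (iv m) /\ snd (iv m) <= snd (iv n).
Proof. induction 1. lra. pose proof (iv_mono m). lra. Qed.

Lemma iv_cross n m : fst (iv n) <= snd (iv m).
Proof.
  destruct (Nat.le_ge_cases n m) as [H|H].
  - pose proof (iv_mono2 _ _ H). pose proof (iv_lt m). lra.
  - pose proof (iv_mono2 _ _ H). pose proof (iv_lt n). lra.
Qed.

Lemma iv_avoid n : h n < fst (iv (S n)) \/ snd (iv (S n)) < h n.
Proof. pose proof (iv_lt n). simpl. destruct (iv n) as [a b]; unfold stepI; simpl in *.
  destruct Rle_dec; simpl; lra. Qed.

Lemma not_surj : exists x, forall n, h n <> x.
Proof.
  destruct (completeness (fun y => exists n, y = fst (iv n))) as [x [Hub Hlub]].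
  - exists 1. intros y [n ->]. apply (iv_cross n 0).
  - exists 0, 0%nat. reflexivity.
  - exists x. intros n E.
    assert (fst (iv (S n)) <= x) by (apply Hub; eauto).
    assert (x <= snd (iv (S n))).
    { apply Hlub. intros y [m ->]. apply iv_cross. }
    pose proof (iv_avoid n). lra.
Qed.
End Unc.

Lemma R_unc : ~ countable (fun _ => True).
Proof. intros [h Hh]. destruct (not_surj h) as [x Hx].
  destruct (Hh x I) as [n Hn]. exact (Hx n Hn). Qed.

Lemma unc_minus (A B : R -> Prop) : ~ countable A -> countable B ->
  ~ countable (fun x => A x /\ ~ B x).
Proof. intros HA HB HC. apply HA. apply C_sub with (B := fun x : R => (A x /\ ~ B x) \/ B x).
  apply C_union2; assumption. intros x Ax. tauto. Qed.
Definition ND (N : R -> Prop) : Prop :=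
  forall a b, a < b -> exists c d, a <= c /\ c < d /\ d <= b /\
     forall x, c < x < d -> ~ N x.

Lemma mkpos (r : R) : 0 < r -> {p : posreal | pos p = r}.
Proof. intros H. exists (mkposreal r H). reflexivity. Qed.

Lemma ND_nd N : ND N -> nowhere_dense N.
Proof.
  intros HN x [dl Hdl].
  pose proof (cond_pos dl) as Hd.
  destruct (HN (x - dl) (x + dl)) as [c [d [H1 [H2 [H3 H4]]]]]; [lra|].
  assert (Hm : adherence N ((c + d) / 2)).
  { apply Hdl. unfold disc. apply Rabs_def1; lra. }
  destruct (mkpos ((d - c) / 2)) as [e He]; [lra|].
  destruct (Hm (disc ((c + d) / 2) e)) as [z [Hz1 Hz2]].
  { exists e. intros y Hy. exact Hy. }
  unfold disc in Hz1. rewrite He in Hz1. apply Rabs_def2 in Hz1.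
  apply (H4 z); [lra | exact Hz2].
Qed.

Lemma nd_ND N : nowhere_dense N -> ND N.
Proof.
  intros HN a b Hab. apply NNPP. intros Hc.
  destruct (mkpos ((b - a) / 2)) as [e He]; [lra|].
  apply (HN ((a + b) / 2)). exists e. intros y Hy. unfold disc in Hy.
  rewrite He in Hy. apply Rabs_def2 in Hy.
  intros V [e' He']. apply NNPP. intros Hno.
  pose proof (cond_pos e').
  apply Hc. exists (Rmax a (y - e')), (Rmin b (y + e')).
  split; [apply Rmax_l|]. split.
  { apply Rmax_lub_lt; apply Rmin_glb_lt; lra. }
  split; [apply Rmin_l|].
  intros x [Hx1 Hx2] Nx. apply Hno. exists x. split; [|exact Nx].
  apply He'. unfold disc.
  pose proof (Rmax_r a (y - e')). pose proof (Rmin_r b (y + e')).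
  apply Rabs_def1; lra.
Qed.

Lemma ND_neg N : ND N -> ND (fun x => N (- x)).
Proof.
  intros HN a b Hab. destruct (HN (-b) (-a)) as [c [d [H1 [H2 [H3 H4]]]]]; [lra|].
  exists (-d), (-c). repeat split; try lra. intros x Hx. apply H4. lra.
Qed.

Lemma ND_affine N c d : 0 < d -> ND N -> ND (fun x => N (c + d * x)).
Proof.
  intros Hd HN a b Hab.
  destruct (HN (c + d * a) (c + d * b)) as [c1 [d1 [H1 [H2 [H3 H4]]]]].
  { nra. }
  exists ((c1 - c) / d), ((d1 - c) / d).
  split. { apply (Rmult_le_reg_l d); [lra|]. field_simplify; lra. }
  split. { apply (Rmult_lt_reg_l d); [lra|]. field_simplify; lra. }
  split. { apply (Rmult_le_reg_l d); [lra|]. field_simplify; lra. }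
  intros x [Hx1 Hx2]. apply H4.
  assert (c1 - c < d * x).
  { apply (Rmult_lt_compat_l d) in Hx1; [|lra]. field_simplify in Hx1; lra. }
  assert (d * x < d1 - c).
  { apply (Rmult_lt_compat_l d) in Hx2; [|lra]. field_simplify in Hx2; lra. }
  lra.
Qed.

Lemma ND_empty : ND (fun _ => False).
Proof. intros a b H. exists a, b. repeat split; lra || tauto. Qed.

Lemma meager_sub A B : meager B -> (forall x, A x -> B x) -> meager A.
Proof. intros [Nn [H1 H2]] H. exists Nn. split; auto. Qed.

Lemma meager_empty : meager (fun _ => False).
Proof. exists (fun _ _ => False). split. intros; apply ND_nd, ND_empty. tauto. Qed.

Lemma meager_bigunion (F : nat -> R -> Prop) :
  (forall n, meager (F n)) -> meager (fun x => exists n, F n x).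
Proof.
  intros H. apply functional_choice in H. destruct H as [G HG].
  exists (fun k => G (fst (of_nat k)) (snd (of_nat k))). split.
  - intros k. apply (proj1 (HG _)).
  - intros x [n Hn]. destruct (proj2 (HG n) x Hn) as [m Hm].
    exists (to_nat (n, m)). rewrite cancel_of_to. exact Hm.
Qed.

Lemma meager_union2 A B : meager A -> meager B -> meager (fun x => A x \/ B x).
Proof.
  intros HA HB. apply meager_sub with (B := fun x : R => exists n : nat, (match n with O => A | _ => B end) x).
  - apply meager_bigunion. intros [|n]; assumption.
  - intros x [H|H]; [exists 0%nat | exists 1%nat]; exact H.
Qed.

Lemma meager_ND N : ND N -> meager N.
Proof. intros H. exists (fun _ => N). split. intros; apply ND_nd, H. intros x Hx; exists 0%nat; exact Hx. Qed.

Lemma meager_affine M c d : 0 < d -> meager M -> meager (fun x => M (c + d * x)).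
Proof.
  intros Hd [Nn [H1 H2]]. exists (fun n x => Nn n (c + d * x)). split.
  - intros n. apply ND_nd, ND_affine; auto. apply nd_ND, H1.
  - intros x Hx. apply H2, Hx.
Qed.
Definition BP (B : R -> Prop) : Prop :=
  exists U M, open_set U /\ meager M /\ forall x, ~ M x -> (B x <-> U x).

Lemma ball_open (U : R -> Prop) x : open_set U -> U x ->
  exists d, 0 < d /\ forall y, Rabs (y - x) < d -> U y.
Proof. intros HU Ux. destruct (HU x Ux) as [e He]. exists e. split.
  apply cond_pos. intros y Hy. apply He. exact Hy. Qed.

Lemma open_of (U : R -> Prop) :
  (forall x, U x -> exists d, 0 < d /\ forall y, Rabs (y - x) < d -> U y) -> open_set U.
Proof. intros H x Ux. destruct (H x Ux) as [d [Hd Hd2]]. destruct (mkpos d Hd) as [e He].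
  exists e. intros y Hy. apply Hd2. unfold disc in Hy. rewrite He in Hy. exact Hy. Qed.

Lemma BP_compl B : BP B -> BP (fun x => ~ B x).
Proof.
  intros [U [M [HU [HM HB]]]].
  set (V := fun x => exists d, 0 < d /\ forall y, Rabs (y - x) < d -> ~ U y).
  set (D := fun x => ~ U x /\ ~ V x).
  exists V, (fun x => M x \/ D x). split; [|split].
  - apply open_of. intros x [d [Hd H]]. exists (d / 2). split; [lra|].
    intros y Hy. exists (d / 2). split; [lra|]. intros z Hz. apply H.
    pose proof (Rabs_triang (z - y) (y - x)).
    replace (z - y + (y - x)) with (z - x) in H0 by ring. lra.
  - apply meager_union2; [exact HM|]. apply meager_ND.
    intros a b Hab. destruct (classic (exists x, a < x < b /\ U x)) as [[x [Hx Ux]]|Hno].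
    + destruct (ball_open U x HU Ux) as [d [Hd H]].
      exists (Rmax a (x - d)), (Rmin b (x + d)).
      split; [apply Rmax_l|]. split; [apply Rmax_lub_lt; apply Rmin_glb_lt; lra|].
      split; [apply Rmin_l|]. intros y [Hy1 Hy2] [HDy _]. apply HDy, H.
      pose proof (Rmax_r a (x - d)). pose proof (Rmin_r b (x + d)).
      apply Rabs_def1; lra.
    + exists a, b. repeat split; try lra. intros x Hx [_ HV]. apply HV.
      exists (Rmin (x - a) (b - x)). split. apply Rmin_glb_lt; lra.
      intros y Hy Uy. apply Hno. exists y. split; [|exact Uy].
      pose proof (Rmin_l (x - a) (b - x)). pose proof (Rmin_r (x - a) (b - x)).
      apply Rabs_def2 in Hy. lra.
  - intros x Hx. specialize (HB x (fun h => Hx (or_introl h))).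
    split.
    + intros nB. destruct (classic (V x)) as [|nV]; [assumption|].
      exfalso. apply Hx. right. split; [tauto|exact nV].
    + intros [d [Hd H]] Bx. apply (H x). rewrite Rminus_diag, Rabs_R0. exact Hd. tauto.
Qed.

Lemma BP_union (F : nat -> R -> Prop) : (forall n, BP (F n)) -> BP (fun x => exists n, F n x).
Proof.
  intros H.
  assert (H' : forall n, exists p : (R -> Prop) * (R -> Prop), open_set (fst p) /\ meager (snd p)
     /\ forall x, ~ snd p x -> (F n x <-> fst p x)).
  { intros n. destruct (H n) as [U [M HH]]. exists (U, M). exact HH. }
  apply functional_choice in H'. destruct H' as [G HG].
  exists (fun x => exists n, fst (G n) x), (fun x => exists n, snd (G n) x).
  split; [|split].
  - intros x [n Hn]. destruct (proj1 (HG n) x Hn) as [e He]. exists e.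
    intros y Hy. exists n. apply He, Hy.
  - apply meager_bigunion. intros n; apply (HG n).
  - intros x Hx. split.
    + intros [n Hn]. exists n. apply (proj2 (proj2 (HG n)) x); [|exact Hn].
      intros h; apply Hx; eauto.
    + intros [n Hn]. exists n. apply (proj2 (proj2 (HG n)) x); [|exact Hn].
      intros h; apply Hx; eauto.
Qed.

Lemma borel_BP B : borel B -> BP B.
Proof.
  induction 1.
  - exists U, (fun _ => False). split; [auto|split; [apply meager_empty|tauto]].
  - apply BP_compl; auto.
  - apply BP_union; auto.
  - destruct IHborel as [U [M [H1 [H2 H3]]]]. exists U, M. split; auto. split; auto.
    intros x Hx. rewrite <- H0. auto.
Qed.

Lemma borel_nonmeager B : borel B -> ~ meager B ->
  exists a b M, a < b /\ meager M /\ forall x, a < x < b -> ~ M x -> B x.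
Proof.
  intros HB HnM. destruct (borel_BP B HB) as [U [M [HU [HM H]]]].
  destruct (classic (exists x, U x)) as [[x Ux]|Hno].
  - destruct (ball_open U x HU Ux) as [d [Hd Hd2]].
    exists (x - d), (x + d), M. split; [lra|split; [exact HM|]].
    intros y Hy HMy. apply (H y HMy). apply Hd2. apply Rabs_def1; lra.
  - exfalso. apply HnM. apply meager_sub with (B := M); [exact HM|].
    intros x Bx. apply NNPP. intros nM. apply Hno. exists x. apply (H x nM), Bx.
Qed.
Lemma CSB (Sg : R -> Prop) (i : R -> R) :
  (forall x y, i x = i y -> x = y) -> (forall x, Sg (i x)) -> card_continuum Sg.
Proof.
  intros Hi HS.
  set (D := fun x => exists n z, ~ Sg z /\ Nat.iter n i z = x).
  assert (Di : forall x, D x -> D (i x)).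
  { intros x [n [z [Hz Hx]]]. exists (S n), z. split; auto. simpl. congruence. }
  exists (fun x => if excluded_middle_informative (D x) then i x else x).
  split; [|split].
  - intros x y. destruct (excluded_middle_informative (D x)) as [Dx|nDx];
      destruct (excluded_middle_informative (D y)) as [Dy|nDy]; intros E.
    + auto.
    + exfalso. apply nDy. rewrite <- E. auto.
    + exfalso. apply nDx. rewrite E. auto.
    + exact E.
  - intros x. destruct (excluded_middle_informative (D x)) as [Dx|nDx]; auto.
    apply NNPP. intros nS. apply nDx. exists O, x. split; auto.
  - intros y Sy. destruct (classic (D y)) as [Dy|nDy].
    + destruct Dy as [[|k] [z [Hz Hy]]].
      * simpl in Hy. subst. contradiction.
      * exists (Nat.iter k i z).
        destruct (excluded_middle_informative (D (Nat.iter k i z))) as [_|nD].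
        -- exact Hy.
        -- exfalso. apply nD. exists k, z. auto.
    + exists y. destruct (excluded_middle_informative (D y)); [contradiction|reflexivity].
Qed.

Definition e (n : nat) : R :=
  let (p, m) := of_nat n in let (k1, k2) := of_nat p in (INR k1 - INR k2) / (INR m + 1).

Lemma IZR_nat2 (k : Z) : IZR k = INR (Z.to_nat k) - INR (Z.to_nat (- k)).
Proof.
  destruct k as [|p|p]; simpl.
  - ring.
  - rewrite INR_IZR_INZ, Znat.positive_nat_Z. ring.
  - rewrite INR_IZR_INZ, Znat.positive_nat_Z. replace (Z.neg p) with (- Z.pos p)%Z by reflexivity. rewrite opp_IZR. ring.
Qed.

Lemma e_dense a b : a < b -> exists n, a < e n < b.
Proof.
  intros Hab. destruct (archimed_cor1 (b - a)) as [N [HN HN0]]; [lra|].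
  set (m := INR N).
  assert (Hm : 0 < m) by (apply lt_0_INR; exact HN0).
  destruct (archimed (a * m)) as [H1 H2].
  set (k := up (a * m)) in *.
  exists (to_nat (to_nat (Z.to_nat k, Z.to_nat (- k)), Nat.pred N)).
  unfold e. rewrite cancel_of_to. rewrite cancel_of_to.
  rewrite <- IZR_nat2.
  replace (INR (Nat.pred N) + 1) with m.
  2:{ unfold m. destruct N; [lia|]. rewrite S_INR. simpl. reflexivity. }
  assert (/ m < b - a) by exact HN.
  split.
  - apply (Rmult_lt_reg_r m); [lra|]. field_simplify; lra.
  - apply (Rmult_lt_reg_r m); [lra|]. field_simplify; [|lra].
    assert (b * m - a * m > 1).
    { apply (Rmult_lt_compat_r m) in H; [|lra]. rewrite Rinv_l in H; lra. }
    lra.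
Qed.
Definition Sgood (S : R -> Prop) : Prop :=
  (exists phi : R -> R, (forall x y, phi x = phi y -> x = y) /\ forall x, S (phi x)) /\
  (forall M, meager M -> countable (fun x => S x /\ M x)) /\
  (forall a b, a < b -> ~ countable (fun x => S x /\ a < x < b)).

Lemma luzin_unc L : luzin L -> ~ countable L.
Proof.
  intros [[f [Hf1 [Hf2 _]]] _] HC. apply R_unc.
  apply (C_preimage _ f). apply C_sub with (B := L); [exact HC|].
  intros y [x [_ <-]]. apply Hf2. intros x y _ _. apply Hf1.
Qed.

Lemma luzin_bounded L : luzin L -> exists N : nat,
  ~ countable (fun x => L x /\ - INR N <= x <= INR N).
Proof.
  intros HL. apply NNPP. intros H. apply (luzin_unc L HL).
  apply C_sub with (B := fun x => exists N, L x /\ - INR N <= x <= INR N).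
  - apply C_bigunion. intros N. apply NNPP. intros HN. apply H. eauto.
  - intros x Lx. destruct (INR_unbounded (Rabs x)) as [N HN]. exists N.
    split; auto. apply Rabs_def2 in HN. split.
    + pose proof (Rabs_pos x). unfold Rabs in HN. destruct (Rcase_abs x); lra.
    + unfold Rabs in HN. destruct (Rcase_abs x); lra.
Qed.

Lemma Sgood_exists L : luzin L -> exists S, Sgood S.
Proof.
  intros HL. pose proof HL as [[f [Hf1 [Hf2 Hf3]]] HLm].
  set (S := fun y => exists k m x, L x /\ y = e k + / (INR m + 1) * x).
  assert (Hpos : forall m, 0 < / (INR m + 1)).
  { intros m. apply Rinv_0_lt_compat. pose proof (pos_INR m). lra. }
  exists S. split; [|split].
  - exists (fun x => e 0 + / (INR 0 + 1) * f x). split.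
    + intros x y E. apply Hf1. simpl in E. lra.
    + intros x. exists 0%nat, 0%nat, (f x). auto.
  - intros M HM.
    apply C_sub with (B := fun y => exists n, exists x,
       (L x /\ M (e (fst (of_nat n)) + / (INR (snd (of_nat n)) + 1) * x)) /\
       e (fst (of_nat n)) + / (INR (snd (of_nat n)) + 1) * x = y).
    + apply C_bigunion. intros n. apply C_image. apply HLm.
      apply meager_affine; auto.
    + intros y [[k [m [x [Lx ->]]]] My]. exists (to_nat (k, m)).
      rewrite cancel_of_to. simpl. exists x. auto.
  - intros a b Hab HC. destruct (luzin_bounded L HL) as [N HN].
    destruct (e_dense a b Hab) as [k Hk].
    set (r := Rmin (e k - a) (b - e k)).
    assert (Hr : 0 < r) by (apply Rmin_glb_lt; lra).
    assert (HN1 : 0 < INR N + 1) by (pose proof (pos_INR N); lra).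
    destruct (archimed_cor1 (r / (INR N + 1))) as [M [HM HM0]].
    { apply Rdiv_lt_0_compat; lra. }
    apply HN. apply (C_preimage _ (fun x => e k + / (INR (Nat.pred M) + 1) * x)).
    + apply C_sub with (B := fun y => S y /\ a < y < b); [exact HC|].
      intros y [x [[Lx Hx] <-]]. split.
      * exists k, (Nat.pred M), x. auto.
      * replace (INR (Nat.pred M) + 1) with (INR M).
        2:{ destruct M; [lia|]. rewrite S_INR. reflexivity. }
        assert (HMp : 0 < INR M) by (apply lt_0_INR; lia).
        assert (Hb : Rabs (/ INR M * x) < r).
        { rewrite Rabs_mult, Rabs_inv, (Rabs_right (INR M)) by lra.
          assert (Rabs x <= INR N) by (apply Rabs_le; lra).
          apply (Rmult_lt_reg_l (INR M)); [lra|].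
          rewrite <- Rmult_assoc, Rinv_r, Rmult_1_l by lra.
          apply Rle_lt_trans with (INR N); [exact H|].
          apply (Rmult_lt_compat_r (INR M)) in HM; [|lra].
          rewrite Rinv_l in HM by lra.
          unfold Rdiv in HM.
          apply (Rmult_lt_compat_r (INR N + 1)) in HM; [|lra].
          replace (r * / (INR N + 1) * INR M * (INR N + 1)) with (INR M * r) in HM
            by (field; lra). lra. }
        apply Rabs_def2 in Hb. pose proof (Rmin_l (e k - a) (b - e k)).
        pose proof (Rmin_r (e k - a) (b - e k)). fold r in H, H0. lra.
    + intros x y _ _ E. pose proof (Hpos (Nat.pred M)).
      apply (Rmult_eq_reg_l (/ (INR (Nat.pred M) + 1))); lra.
Qed.
Lemma cont_eps (g : R -> R) : continuity g -> forall t eps, 0 < eps ->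
  exists d, 0 < d /\ forall s, Rabs (s - t) < d -> Rabs (g s - g t) < eps.
Proof.
  intros Hg t eps He. specialize (Hg t). unfold continuity_pt, continue_in, limit1_in, limit_in in Hg.
  destruct (Hg eps He) as [d [Hd H]]. exists d. split; [exact Hd|].
  intros s Hs. destruct (Req_dec s t) as [->|Hne].
  - rewrite Rminus_diag, Rabs_R0. exact He.
  - apply (H s). split. split; [exact I|auto]. exact Hs.
Qed.

Definition mono (g : R -> R) a b :=
  (forall s t, a < s -> s < t -> t < b -> g s < g t) \/
  (forall s t, a < s -> s < t -> t < b -> g t < g s).

Lemma mono_sub g a b a' b' : mono g a b -> a <= a' -> b' <= b -> mono g a' b'.
Proof. intros [H|H] H1 H2; [left|right]; intros s t Hs Hst Ht; apply H; lra. Qed.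

Lemma mono_inj g a b s t : mono g a b -> a < s < b -> a < t < b -> g s = g t -> s = t.
Proof.
  intros Hm Hs Ht E. destruct (Rtotal_order s t) as [H|[H|H]]; auto;
  exfalso; destruct Hm as [Hm|Hm].
  - pose proof (Hm s t ltac:(lra) H ltac:(lra)). lra.
  - pose proof (Hm s t ltac:(lra) H ltac:(lra)). lra.
  - pose proof (Hm t s ltac:(lra) H ltac:(lra)). lra.
  - pose proof (Hm t s ltac:(lra) H ltac:(lra)). lra.
Qed.

Lemma ND_image_inc (g : R -> R) a0 b0 N : continuity g ->
  (forall s t, a0 < s -> s < t -> t < b0 -> g s < g t) -> ND N ->
  ND (fun y => exists t, a0 < t < b0 /\ N t /\ g t = y).
Proof.
  intros Hc Hm HN a b Hab.
  destruct (classic (exists t, a0 < t < b0 /\ a < g t < b)) as [[t [Ht Hgt]]|Hno].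
  2:{ exists a, b. repeat split; try lra. intros y Hy [t [Ht [_ <-]]]. apply Hno. eauto. }
  destruct (cont_eps g Hc t (Rmin (g t - a) (b - g t))) as [d [Hd Hd2]].
  { apply Rmin_glb_lt; lra. }
  pose proof (Rmin_l (g t - a) (b - g t)). pose proof (Rmin_r (g t - a) (b - g t)).
  set (c0 := Rmax a0 (t - d)). set (d0 := Rmin b0 (t + d)).
  pose proof (Rmax_l a0 (t - d)). pose proof (Rmax_r a0 (t - d)).
  pose proof (Rmin_l b0 (t + d)). pose proof (Rmin_r b0 (t + d)).
  fold c0 d0 in H1, H2, H3, H4.
  assert (c0 < d0) by (unfold c0, d0; apply Rmax_lub_lt; apply Rmin_glb_lt; lra).
  destruct (HN c0 d0 H5) as [c [d' [Hc1 [Hc2 [Hc3 Hc4]]]]].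
  set (c' := (2 * c + d') / 3). set (d'' := (c + 2 * d') / 3).
  assert (Hin : forall s, c0 < s < d0 -> a < g s < b).
  { intros s Hs. assert (Rabs (g s - g t) < Rmin (g t - a) (b - g t)).
    { apply Hd2. apply Rabs_def1; lra. }
    apply Rabs_def2 in H6. lra. }
  assert (Hcd : g c' < g d'') by (apply Hm; unfold c', d''; lra).
  pose proof (Hin c' ltac:(unfold c'; lra)). pose proof (Hin d'' ltac:(unfold d''; lra)).
  exists (g c'), (g d''). repeat split; try lra.
  intros y Hy [s [Hs [Ns <-]]].
  assert (c' < s).
  { destruct (Rle_or_lt s c') as [Hle|]; [|assumption]. exfalso.
    destruct (Req_dec s c') as [->|Hne]; [lra|].
    pose proof (Hm s c' ltac:(lra) ltac:(lra) ltac:(unfold c'; lra)). lra. }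
  assert (s < d'').
  { destruct (Rle_or_lt d'' s) as [Hle|]; [|assumption]. exfalso.
    destruct (Req_dec s d'') as [->|Hne]; [lra|].
    pose proof (Hm d'' s ltac:(unfold d''; lra) ltac:(lra) ltac:(lra)). lra. }
  apply (Hc4 s); [unfold c', d'' in *; lra | exact Ns].
Qed.

Lemma continuity_opp g : continuity g -> continuity (fun t => - g t).
Proof. intros H. apply continuity_opp, H. Qed.

Lemma ND_image (g : R -> R) a0 b0 N : continuity g -> mono g a0 b0 -> ND N ->
  ND (fun y => exists t, a0 < t < b0 /\ N t /\ g t = y).
Proof.
  intros Hc [Hm|Hm] HN.
  - apply ND_image_inc; auto.
  - pose proof (ND_image_inc (fun t => - g t) a0 b0 N (continuity_opp g Hc)) as H.
    assert (H' : ND (fun y => exists t, a0 < t < b0 /\ N t /\ - g t = y)).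
    { apply H; auto. intros s t H1 H2 H3. pose proof (Hm s t H1 H2 H3). lra. }
    apply ND_neg in H'. intros a b Hab. destruct (H' a b Hab) as [c [d [H1 [H2 [H3 H4]]]]].
    exists c, d. repeat split; auto. intros x Hx [t [Ht [Nt E]]]. apply (H4 x Hx).
    exists t. repeat split; auto; lra.
Qed.

Lemma meager_image g a0 b0 M : continuity g -> mono g a0 b0 -> meager M ->
  meager (fun y => exists t, a0 < t < b0 /\ M t /\ g t = y).
Proof.
  intros Hc Hm [Nn [H1 H2]].
  exists (fun n y => exists t, a0 < t < b0 /\ Nn n t /\ g t = y). split.
  - intros n. apply ND_nd, ND_image; auto. apply nd_ND, H1.
  - intros y [t [Ht [Mt <-]]]. destruct (H2 t Mt) as [n Hn]. exists n, t. auto.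
Qed.

Lemma image_interval_inc g c d : continuity g -> c < d ->
  (forall s t, c < s -> s < t -> t < d -> g s < g t) ->
  exists v1 v2, v1 < v2 /\ forall y, v1 < y < v2 -> exists t, c < t < d /\ g t = y.
Proof.
  intros Hc Hcd Hm. set (c' := (2 * c + d) / 3). set (d' := (c + 2 * d) / 3).
  exists (g c'), (g d'). split. { apply Hm; unfold c', d'; lra. }
  intros y Hy.
  destruct (IVT (fun t => g t - y) c' d') as [t [Ht E]].
  - apply continuity_minus; [exact Hc | apply continuity_const; intros ? ?; reflexivity].
  - unfold c', d'; lra.
  - lra.
  - lra.
  - exists t. split; [unfold c', d' in *; lra | lra].
Qed.

Lemma image_interval g c d : continuity g -> c < d -> mono g c d ->
  exists v1 v2, v1 < v2 /\ forall y, v1 < y < v2 -> exists t, c < t < d /\ g t = y.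
Proof.
  intros Hc Hcd [Hm|Hm]. apply image_interval_inc; auto.
  destruct (image_interval_inc (fun t => - g t) c d (continuity_opp g Hc) Hcd) as [v1 [v2 [Hv H]]].
  { intros s t H1 H2 H3. pose proof (Hm s t H1 H2 H3). lra. }
  exists (- v2), (- v1). split; [lra|]. intros y Hy. destruct (H (- y)) as [t [Ht E]]; [lra|].
  exists t. split; auto. lra.
Qed.
Lemma key (S : R -> Prop) (g : R -> R) (E : R -> Prop) :
  Sgood S -> continuity g -> (forall y, exists t, g t = y) -> countable E ->
  (forall t, ~ E t -> exists d, 0 < d /\ mono g (t - d) (t + d)) ->
  strong_luzin (fun t => S (g t)).
Proof.
  intros [[phi [Hphi1 Hphi2]] [SM Sint]] Hc Hsurj HE Hloc.
  assert (Hii : forall M, meager M -> countable (fun t => S (g t) /\ M t)).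
  { intros M HM.
    apply C_sub with (B := fun t => E t \/ exists n,
      (mono g (e (fst (of_nat n))) (e (snd (of_nat n))) /\
       e (fst (of_nat n)) < t < e (snd (of_nat n)) /\ S (g t) /\ M t)).
    - apply C_union2; [exact HE|]. apply C_bigunion. intros n.
      set (a := e (fst (of_nat n))). set (b := e (snd (of_nat n))).
      destruct (classic (mono g a b)) as [Hm|Hm].
      + apply (C_preimage _ g).
        * apply C_sub with (B := fun y => S y /\ (fun y => exists t, a < t < b /\ M t /\ g t = y) y).
          -- apply SM. apply meager_image; auto.
          -- intros y [t [[_ [Ht [St Mt]]] <-]]. split; auto. exists t. auto.
        * intros x y [_ [Hx _]] [_ [Hy _]]. apply (mono_inj g a b); auto.
      + apply C_sub with (B := fun _ => False); [apply C_empty|]. intros x [H _]; auto.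
    - intros t [St Mt]. destruct (classic (E t)) as [|nE]; [left; auto|right].
      destruct (Hloc t nE) as [d [Hd Hm]].
      destruct (e_dense (t - d) t) as [i Hi]; [lra|].
      destruct (e_dense t (t + d)) as [j Hj]; [lra|].
      exists (to_nat (i, j)). rewrite cancel_of_to. simpl.
      repeat split; auto; try lra. apply (mono_sub g (t - d) (t + d)); auto; lra. }
  split; [split|].
  -
    set (psi := fun y => epsilon (inhabits 0) (fun t => g t = y)).
    assert (Hpsi : forall y, g (psi y) = y).
    { intros y. unfold psi. apply (epsilon_spec (inhabits 0) (fun t => g t = y)). apply Hsurj. }
    apply (CSB _ (fun x => psi (phi x))).
    + intros x y E'. apply Hphi1. rewrite <- (Hpsi (phi x)), <- (Hpsi (phi y)). congruence.
    + intros x. simpl. rewrite Hpsi. apply Hphi2.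
  - exact Hii.
  - intros B HB HnM HC.
    destruct (borel_nonmeager B HB HnM) as [a [b [M [Hab [HM HBM]]]]].
    assert (Hab' : ~ countable (fun t => a < t < b)).
    { intros H. apply (Sint a b Hab). apply C_sub with (B := fun t => a < t < b); auto. tauto. }
    destruct (classic (exists t1, a < t1 < b /\ ~ E t1)) as [[t1 [Ht1 nE]]|Hno].
    2:{ apply Hab'. apply C_sub with (B := E); auto. intros t Ht. apply NNPP. intros nE.
        apply Hno. eauto. }
    destruct (Hloc t1 nE) as [d [Hd Hm]].
    set (c := Rmax a (t1 - d)). set (d' := Rmin b (t1 + d)).
    pose proof (Rmax_l a (t1 - d)). pose proof (Rmax_r a (t1 - d)).
    pose proof (Rmin_l b (t1 + d)). pose proof (Rmin_r b (t1 + d)).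
    fold c d' in H, H0, H1, H2.
    assert (Hcd : c < d') by (unfold c, d'; apply Rmax_lub_lt; apply Rmin_glb_lt; lra).
    assert (Hm' : mono g c d') by (apply (mono_sub g (t1 - d) (t1 + d)); auto).
    destruct (image_interval g c d' Hc Hcd Hm') as [v1 [v2 [Hv Hv2]]].
    apply (Sint v1 v2 Hv).
    apply C_sub with (B := fun y => (exists t, (S (g t) /\ B t) /\ g t = y) \/
        (S y /\ (fun y => exists t, c < t < d' /\ M t /\ g t = y) y)).
    + apply C_union2. apply C_image; auto. apply SM. apply meager_image; auto.
    + intros y [Sy Hy]. destruct (Hv2 y Hy) as [t [Ht <-]].
      destruct (classic (M t)) as [Mt|nMt].
      * right. split; auto. exists t. auto.
      * left. exists t. repeat split; auto. apply HBM; auto. lra.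
Qed.
Lemma dist2_sq p q s t : dist2 p q = Rabs (s - t) ->
  (fst p - fst q) ^ 2 + (snd p - snd q) ^ 2 = (s - t) ^ 2.
Proof.
  unfold dist2. intros H. rewrite <- (pow2_abs (s - t)), <- H.
  rewrite pow2_sqrt; [reflexivity|]. apply Rplus_le_le_0_compat; apply pow2_ge_0.
Qed.

Lemma iso_affine T : isometry_R_R2 T -> exists p1 p2 u1 u2,
  u1 ^ 2 + u2 ^ 2 = 1 /\ forall t, fst (T t) = p1 + u1 * t /\ snd (T t) = p2 + u2 * t.
Proof.
  intros HT.
  exists (fst (T 0)), (snd (T 0)), (fst (T 1) - fst (T 0)), (snd (T 1) - snd (T 0)).
  pose proof (dist2_sq _ _ _ _ (HT 1 0)) as HU.
  split. { rewrite HU. ring. }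
  intros t.
  pose proof (dist2_sq _ _ _ _ (HT t 0)) as H1.
  pose proof (dist2_sq _ _ _ _ (HT t 1)) as H2.
  set (a := fst (T t) - fst (T 0)) in *. set (b := snd (T t) - snd (T 0)) in *.
  set (U1 := fst (T 1) - fst (T 0)) in *. set (U2 := snd (T 1) - snd (T 0)) in *.
  assert (E1 : a ^ 2 + b ^ 2 = t ^ 2) by (transitivity ((t - 0) ^ 2); [rewrite <- H1; unfold a, b; ring | ring]).
  assert (E2 : (a - U1) ^ 2 + (b - U2) ^ 2 = (t - 1) ^ 2).
  { rewrite <- H2. unfold a, b, U1, U2. ring. }
  assert (E3 : U1 ^ 2 + U2 ^ 2 = 1) by (transitivity ((1 - 0) ^ 2); [rewrite <- HU; unfold U1, U2; ring | ring]).
  assert (E2' : a ^ 2 + b ^ 2 - 2 * (a * U1 + b * U2) + (U1 ^ 2 + U2 ^ 2) = t ^ 2 - 2 * t + 1).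
  { transitivity ((a - U1) ^ 2 + (b - U2) ^ 2); [ring | rewrite E2; ring]. }
  rewrite E1, E3 in E2'.
  assert (E4 : a * U1 + b * U2 = t). { set (w := a * U1 + b * U2) in *. set (z := t ^ 2) in *. clearbody w z. lra. }
  assert (E5 : (a - t * U1) ^ 2 + (b - t * U2) ^ 2 = 0).
  { replace ((a - t * U1) ^ 2 + (b - t * U2) ^ 2) with
      ((a ^ 2 + b ^ 2) - 2 * t * (a * U1 + b * U2) + t ^ 2 * (U1 ^ 2 + U2 ^ 2)) by ring.
    rewrite E1, E4, E3. ring. }
  pose proof (pow2_ge_0 (a - t * U1)). pose proof (pow2_ge_0 (b - t * U2)).
  assert (a - t * U1 = 0).
  { destruct (Req_dec (a - t * U1) 0) as [|Hn]; auto. apply (pow_nonzero _ 2) in Hn. lra. }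
  assert (b - t * U2 = 0).
  { destruct (Req_dec (b - t * U2) 0) as [|Hn]; auto. apply (pow_nonzero _ 2) in Hn. lra. }
  unfold a, b in *. split; lra.
Qed.
Lemma abs_le_split x a : Rabs x <= a -> - a <= x <= a.
Proof. intros H. pose proof (Rle_abs x). pose proof (Rle_abs (- x)). rewrite Rabs_Ropp in H1. lra. Qed.

Section Cubic.
Variables p1 p2 u1 u2 : R.
Hypothesis Hu : u1 ^ 2 + u2 ^ 2 = 1.
Definition G t := p1 + u1 * t + (p2 + u2 * t) ^ 3.

Lemma G_cont : continuity G.
Proof. unfold G. reg. Qed.

Lemma cubic_surj (be ga : R) : exists s, s ^ 3 + be * s + ga = 0.
Proof.
  set (K := 1 + Rabs be + Rabs ga).
  pose proof (Rabs_pos be). pose proof (Rabs_pos ga).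
  pose proof (Rle_abs be). pose proof (Rle_abs ga).
  pose proof (Rle_abs (- be)). pose proof (Rle_abs (- ga)). rewrite Rabs_Ropp in H3, H4.
  assert (HK : 1 <= K) by (unfold K; lra).
  assert (HK2 : K <= K * K) by nra.
  assert (HK4 : K - Rabs be = 1 + Rabs ga) by (unfold K; ring).
  assert (HK5 : K * K - Rabs be >= 1 + Rabs ga) by lra.
  assert (HK6 : K * (K * K - Rabs be) >= 1 + Rabs ga).
  { assert (K * (K * K - Rabs be) - (K * K - Rabs be) = (K - 1) * (K * K - Rabs be)) by ring.
    assert (0 <= (K - 1) * (K * K - Rabs be)) by (apply Rmult_le_pos; lra). lra. }
  assert (Hbk : be * K >= - Rabs be * K) by nra.
  assert (Hbk2 : - be * K <= Rabs be * K) by nra.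
  assert (HK3e : K ^ 3 = K * (K * K)) by ring.
  assert (A1 : 0 < K ^ 3 + be * K + ga).
  { rewrite HK3e. assert (K * (K * K) = K * (K * K - Rabs be) + Rabs be * K) by ring. lra. }
  assert (A2 : (- K) ^ 3 + be * (- K) + ga < 0).
  { replace ((- K) ^ 3) with (- (K * (K * K))) by ring.
    assert (K * (K * K) = K * (K * K - Rabs be) + Rabs be * K) by ring. lra. }
  destruct (IVT (fun s => s ^ 3 + be * s + ga) (- K) K) as [s [_ Hs]].
  - reg.
  - lra.
  - exact A2.
  - exact A1.
  - exists s. exact Hs.
Qed.

Lemma G_surj : forall y, exists t, G t = y.
Proof.
  intros y. destruct (Req_dec u2 0) as [H0|H0].
  - assert (u1 <> 0) by (intros E; rewrite E, H0 in Hu; simpl in Hu; lra).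
    exists ((y - p1 - p2 ^ 3) / u1). unfold G. rewrite H0. field. auto.
  - destruct (cubic_surj (u1 / u2) (p1 - u1 * p2 / u2 - y)) as [s Hs].
    exists ((s - p2) / u2). unfold G.
    replace (p2 + u2 * ((s - p2) / u2)) with s by (field; auto).
    replace (p1 + u1 * ((s - p2) / u2) + s ^ 3) with
      (s ^ 3 + u1 / u2 * s + (p1 - u1 * p2 / u2 - y) + y) by (field; auto).
    lra.
Qed.

Definition Ecrit t := u1 + 3 * u2 * (p2 + u2 * t) ^ 2 = 0.

Lemma Ecrit_countable : countable Ecrit.
Proof.
  destruct (Req_dec u2 0) as [H0|H0].
  - apply C_sub with (B := fun _ => False); [apply C_empty|].
    intros t Ht. unfold Ecrit in Ht. rewrite H0 in Ht.
    assert (u1 = 0) by lra. rewrite H, H0 in Hu. simpl in Hu. lra.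
  - set (c := - u1 / (3 * u2)).
    exists (fun n => match n with O => (sqrt c - p2) / u2 | _ => (- sqrt c - p2) / u2 end).
    intros t Ht. unfold Ecrit in Ht. set (s := p2 + u2 * t) in *.
    assert (Hs : s ^ 2 = c).
    { unfold c. apply (Rmult_eq_reg_l (3 * u2)); [| intro; apply H0; lra].
      replace (3 * u2 * (- u1 / (3 * u2))) with (- u1) by (field; auto). lra. }
    assert (Habs : Rabs s = sqrt c).
    { rewrite <- Hs. rewrite <- sqrt_pow2 with (x := Rabs s) by apply Rabs_pos.
      f_equal. rewrite <- (pow2_abs s). reflexivity. }
    assert (Ht' : t = (s - p2) / u2) by (unfold s; field; auto).
    unfold Rabs in Habs. destruct (Rcase_abs s).
    + exists 1%nat. rewrite Ht'. f_equal. lra.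
    + exists 0%nat. rewrite Ht'. f_equal. lra.
Qed.

Definition Dq t1 t2 := u1 + u2 * ((p2 + u2 * t1) ^ 2 + (p2 + u2 * t1) * (p2 + u2 * t2) + (p2 + u2 * t2) ^ 2).

Lemma G_diff t1 t2 : G t2 - G t1 = (t2 - t1) * Dq t1 t2.
Proof. unfold G, Dq. ring. Qed.

Lemma u2_bound : Rabs u2 <= 1.
Proof. apply Rabs_le. split; nra. Qed.

Lemma alg_bound (s e1 e2 d : R) : 0 < d <= 1 -> Rabs e1 <= d -> Rabs e2 <= d ->
  Rabs (u2 * (3 * s * (e1 + e2) + e1 ^ 2 + e1 * e2 + e2 ^ 2)) <= d * (6 * Rabs s + 3).
Proof.
  intros Hd H1 H2. pose proof u2_bound. rewrite Rabs_mult.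
  assert (Rabs (3 * s * (e1 + e2) + e1 ^ 2 + e1 * e2 + e2 ^ 2) <= d * (6 * Rabs s + 3)).
  { replace (3 * s * (e1 + e2) + e1 ^ 2 + e1 * e2 + e2 ^ 2) with
      (3 * s * (e1 + e2) + (e1 ^ 2 + e1 * e2 + e2 ^ 2)) by ring.
    eapply Rle_trans. apply Rabs_triang.
    assert (Hx : Rabs (3 * s * (e1 + e2)) <= 6 * Rabs s * d).
    { rewrite !Rabs_mult. rewrite (Rabs_right 3) by lra.
      pose proof (Rabs_triang e1 e2). pose proof (Rabs_pos s). pose proof (Rabs_pos (e1 + e2)).
      assert (Rabs (e1 + e2) <= 2 * d) by lra. nra. }
    assert (E1 : e1 ^ 2 <= d * d).
    { rewrite <- (pow2_abs e1). pose proof (Rabs_pos e1). simpl. nra. }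
    assert (E2 : e2 ^ 2 <= d * d).
    { rewrite <- (pow2_abs e2). pose proof (Rabs_pos e2). simpl. nra. }
    assert (Hy : Rabs (e1 ^ 2 + e1 * e2 + e2 ^ 2) <= 3 * d).
    { rewrite Rabs_right by nra. assert (e1 * e2 <= d * d) by nra. nra. }
    lra. }
  pose proof (Rabs_pos u2). pose proof (Rabs_pos (3 * s * (e1 + e2) + e1 ^ 2 + e1 * e2 + e2 ^ 2)).
  nra.
Qed.

Lemma G_local t : ~ Ecrit t -> exists d, 0 < d /\ mono G (t - d) (t + d).
Proof.
  intros Ht. unfold Ecrit in Ht. set (s := p2 + u2 * t) in *.
  set (D0 := u1 + 3 * u2 * s ^ 2) in *.
  pose proof (Rabs_pos s).
  assert (HD0 : 0 < Rabs D0) by (apply Rabs_pos_lt; exact Ht).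
  set (d := Rmin 1 (Rabs D0 / (2 * (6 * Rabs s + 3)))).
  assert (Hdpos : 0 < d).
  { apply Rmin_glb_lt; [lra|]. apply Rdiv_lt_0_compat; lra. }
  assert (Hd1 : d <= 1) by apply Rmin_l.
  assert (Hd2 : d * (6 * Rabs s + 3) <= Rabs D0 / 2).
  { assert (d <= Rabs D0 / (2 * (6 * Rabs s + 3))) by apply Rmin_r.
    apply (Rmult_le_compat_r (6 * Rabs s + 3)) in H0; [|lra].
    replace (Rabs D0 / (2 * (6 * Rabs s + 3)) * (6 * Rabs s + 3)) with (Rabs D0 / 2) in H0
      by (field; lra). exact H0. }
  assert (Hclose : forall t1 t2, t - d < t1 < t + d -> t - d < t2 < t + d ->
     Rabs (Dq t1 t2 - D0) <= Rabs D0 / 2).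
  { intros t1 t2 H1 H2. pose proof u2_bound.
    set (e1 := u2 * (t1 - t)). set (e2 := u2 * (t2 - t)).
    assert (Rabs e1 <= d).
    { unfold e1. rewrite Rabs_mult. assert (Rabs (t1 - t) <= d) by (apply Rabs_le; lra).
      pose proof (Rabs_pos u2). pose proof (Rabs_pos (t1 - t)). nra. }
    assert (Rabs e2 <= d).
    { unfold e2. rewrite Rabs_mult. assert (Rabs (t2 - t) <= d) by (apply Rabs_le; lra).
      pose proof (Rabs_pos u2). pose proof (Rabs_pos (t2 - t)). nra. }
    replace (Dq t1 t2 - D0) with (u2 * (3 * s * (e1 + e2) + e1 ^ 2 + e1 * e2 + e2 ^ 2))
      by (unfold Dq, D0, e1, e2, s; ring).
    eapply Rle_trans; [apply (alg_bound s e1 e2 d); [split; assumption | assumption | assumption] | exact Hd2]. }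
  exists d. split; [exact Hdpos|].
  destruct (Rlt_or_le 0 D0) as [Hp|Hn].
  - left. intros s1 s2 H1 H2 H3. assert (Hq := Hclose s1 s2 ltac:(lra) ltac:(lra)).
    rewrite Rabs_right in HD0 by lra. rewrite (Rabs_right D0) in Hq by lra.
    apply abs_le_split in Hq.
    pose proof (G_diff s1 s2). assert (0 < (s2 - s1) * Dq s1 s2) by (apply Rmult_lt_0_compat; lra).
    lra.
  - right. intros s1 s2 H1 H2 H3. assert (Hq := Hclose s1 s2 ltac:(lra) ltac:(lra)).
    assert (D0 < 0) by (destruct Hn; auto; exfalso; apply Ht; auto).
    rewrite (Rabs_left D0) in Hq by lra.
    apply abs_le_split in Hq.
    pose proof (G_diff s1 s2). assert (0 < (s2 - s1) * (- Dq s1 s2)) by (apply Rmult_lt_0_compat; lra).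
    lra.
Qed.
End Cubic.
Theorem mainTheorem6 :
  (exists L : R -> Prop, luzin L) ->
  exists A : R * R -> Prop,
    forall T : R -> R * R, isometry_R_R2 T ->
      strong_luzin (fun t => A (T t)).
Proof.
  intros [L HL]. destruct (Sgood_exists L HL) as [S HS].
  exists (fun p => S (fst p + snd p ^ 3)). intros T HT.
  destruct (iso_affine T HT) as [p1 [p2 [u1 [u2 [Hu HTt]]]]].
  assert (Heq : (fun t => S (fst (T t) + snd (T t) ^ 3)) = (fun t => S (G p1 p2 u1 u2 t))).
  { apply functional_extensionality. intros t. destruct (HTt t) as [E1 E2].
    unfold G. rewrite E1, E2. reflexivity. }
  change (strong_luzin (fun t => S (fst (T t) + snd (T t) ^ 3))). rewrite Heq.
  apply (key S (G p1 p2 u1 u2) (Ecrit p2 u1 u2)); auto.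
  - apply G_cont.
  - apply G_surj; auto.
  - apply Ecrit_countable; auto.
  - intros t Ht. apply G_local; auto.
Qed.
Print Assumptions mainTheorem6.
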